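(* Let $a_2,a_3$ be integers with $1<a_2<a_3$, $A=\{1,a_2,a_3\}$, and let $SG(A,n,p)$ be a stride generator. Then there exists an integer $x$ with $a_3-a_2\le x<a_3$ which has no $n$-generation of order $<p$ (i.e. $x$ is covered only by threads of order $p$ among threads of order $\le p$).
   Context: For integers $n$ and $i\ge 0$, an integer $x$ has an $n$-generation of order $i$ if there are integers $c_1,c_2\ge 0$ with $x+ia_3=c_2a_2+c_1$ and $c_1+c_2\le n+i$. For integers $n$ and $p\ge0$, $SG(A,n,p)$ is a stride generator if: (A) every integer $0\le x<a_3$ has an $n$-generation of some order $\le p$; (B) at least one integer $0\le x<a_3$ has no $n$-generation of order $<p$; (C) at least one integer $0\le y<a_3$ has no $(n-1)$-generation of any order $\le p+1$. A thread of order $i$ is an integer interval $[ea_2-ia_3,\, ea_2-ia_3+(n+i)-e]$ with integers $e\ge0$, $n+i-e\ge0$; $x$ has an $n$-generation of order $i$ iff $x$ lies in some thread of order $i$. *)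

(* Defs.v *)
From Stdlib Require Export ZArith Lia.
Open Scope Z_scope.

Definition has_generation (a2 a3 n i x : Z) : Prop :=
  exists c1 c2 : Z, 0 <= c1 /\ 0 <= c2 /\
    x + i * a3 = c2 * a2 + c1 /\ c1 + c2 <= n + i.

Definition stride_generator (a2 a3 n p : Z) : Prop :=
  0 <= p /\
  (forall x, 0 <= x < a3 -> exists i, 0 <= i <= p /\ has_generation a2 a3 n i x) /\
  (exists x, 0 <= x < a3 /\ forall i, 0 <= i < p -> ~ has_generation a2 a3 n i x) /\
  (exists y, 0 <= y < a3 /\ forall i, 0 <= i <= p + 1 -> ~ has_generation a2 a3 (n - 1) i y).

(* Main.v *)
Require Import Defs.

Lemma step (a2 a3 n p x : Z) : 1 < a2 -> 0 <= a3 -> 0 <= x ->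
  (forall i, 0 <= i < p -> ~ has_generation a2 a3 n i x) ->
  forall i, 0 <= i < p -> ~ has_generation a2 a3 n i (x + a2).
Proof.
  intros Ha Ha3 Hx H i Hi [c1 [c2 [H1 [H2 [H3 H4]]]]].
  apply (H i Hi).
  destruct (Z.eq_dec c2 0) as [->|Hc].
  - exists (c1 - a2), 0. nia.
  - exists c1, (c2 - 1). nia.
Qed.

Theorem lemma2 (a2 a3 n p : Z) :
  1 < a2 -> a2 < a3 ->
  stride_generator a2 a3 n p ->
  exists x, a3 - a2 <= x < a3 /\
    forall i, 0 <= i < p -> ~ has_generation a2 a3 n i x.
Proof.
  intros Ha Ha3 [Hp [_ [[x0 [Hx0 HB]] _]]].
  assert (G : forall k : nat, forall x, a3 - x <= Z.of_nat k -> 0 <= x < a3 ->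
    (forall i, 0 <= i < p -> ~ has_generation a2 a3 n i x) ->
    exists x, a3 - a2 <= x < a3 /\
      forall i, 0 <= i < p -> ~ has_generation a2 a3 n i x).
  { induction k as [|k IH]; intros x Hk Hx HN.
    - lia.
    - destruct (Z_le_gt_dec (a3 - a2) x).
      + exists x; split; [lia|exact HN].
      + apply (IH (x + a2)); [lia|lia|].
        apply step; auto; lia. }
  apply (G (Z.to_nat (a3 - x0)) x0); [lia|lia|exact HB].
Qed.
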